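(* Given an $n$-qubit state $\lvert\psi\rangle$, let $\lvert\phi\rangle$ be a stabilizer state that maximizes the stabilizer fidelity, and let $S^* = \mathrm{Weyl}(\lvert\phi\rangle)$. Then \[\sum_{x \in S^*} p_\psi(x) \geq F_\mathcal{S}(\lvert\psi\rangle)^2.\]
   Context: For $x=(a,b)\in\mathbb F_2^{2n}$ the Weyl operator is $W_x = i^{a\cdot b}X^{a_1}Z^{b_1}\otimes\cdots\otimes X^{a_n}Z^{b_n}$; $p_\psi(x)=2^{-n}\langle\psi|W_x|\psi\rangle^2$; $\mathrm{Weyl}(\lvert\phi\rangle)=\{x\in\mathbb F_2^{2n}: W_x\lvert\phi\rangle=\pm\lvert\phi\rangle\}$; $F_\mathcal{S}(\lvert\psi\rangle)=\max_{\lvert\phi\rangle\text{ stabilizer}}\lvert\langle\phi|\psi\rangle\rvert^2$. *)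

(* Defs.v *)
From HB Require Import structures.
From mathcomp Require Import all_boot all_order all_algebra.
From mathcomp Require Import reals complex.

Set Implicit Arguments.
Unset Strict Implicit.
Unset Printing Implicit Defensive.

Import Order.TTheory GRing.Theory Num.Theory.
Local Open Scope ring_scope.
Local Open Scope complex_scope.

Definition bits (n : nat) := {ffun 'I_n -> bool}.

(* Vectors of the n-qubit Hilbert space (C^2)^{(x) n}, in the computational basis.
   Scalars are R[i], the complex numbers over a real field R. *)
Definition qvec (R : realType) (n : nat) := {ffun bits n -> R[i]}.

(* Linear operators on n qubits, given by their matrix entries <r|M|c>. *)
Definition qop (R : realType) (n : nat) := bits n -> bits n -> R[i].
Definition qop1 (R : realType) := bool -> bool -> R[i].

Definition id1 (R : realType) : qop1 R := fun r c => (r == c)%:R.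
Definition pauliX (R : realType) : qop1 R := fun r c => (r != c)%:R.
Definition pauliZ (R : realType) : qop1 R :=
  fun r c => (r == c)%:R * (if c then -1 else 1).
Definition hadamard (R : realType) : qop1 R :=
  fun r c => (if r && c then -1 else 1) / (Num.sqrt (2 : R))%:C.
Definition phaseS (R : realType) : qop1 R :=
  fun r c => (r == c)%:R * (if c then 'i else 1).

Definition mul1 (R : realType) (A B : qop1 R) : qop1 R :=
  fun r c => \sum_(k : bool) A r k * B k c.

Definition tens (R : realType) (n : nat) (A : 'I_n -> qop1 R) : qop R n :=
  fun r c => \prod_(j < n) A j (r j) (c j).

Definition qid (R : realType) (n : nat) : qop R n := fun r c => (r == c)%:R.

Definition qmul (R : realType) (n : nat) (A B : qop R n) : qop R n :=
  fun r c => \sum_(m : bits n) A r m * B m c.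

Definition qapply (R : realType) (n : nat) (M : qop R n) (v : qvec R n) : qvec R n :=
  [ffun r => \sum_(c : bits n) M r c * v c].

Definition braket (R : realType) (n : nat) (u v : qvec R n) : R[i] :=
  \sum_(z : bits n) (u z)^* * v z.

Definition is_state (R : realType) (n : nat) (psi : qvec R n) : Prop :=
  braket psi psi = 1.

(* a . b for a, b in F_2^n, computed as an integer (number of common 1's). *)
Definition bdot (n : nat) (a b : bits n) : nat := #|[set j : 'I_n | a j && b j]|.

(* Weyl operator W_x = i^{a.b} X^{a_1}Z^{b_1} (x) ... (x) X^{a_n}Z^{b_n}, x = (a,b). *)
Definition weyl (R : realType) (n : nat) (x : bits n * bits n) : qop R n :=
  fun r c => 'i ^+ (bdot x.1 x.2) *
    tens (fun j => mul1 (if x.1 j then pauliX R else id1 R)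
                        (if x.2 j then pauliZ R else id1 R)) r c.

Definition p_psi (R : realType) (n : nat) (psi : qvec R n) (x : bits n * bits n) : R[i] :=
  (2%:R ^+ n)^-1 * (braket psi (qapply (weyl R x) psi)) ^+ 2.

Definition weyl_set (R : realType) (n : nat) (phi : qvec R n) : {set bits n * bits n} :=
  [set x | (qapply (weyl R x) phi == phi) || (qapply (weyl R x) phi == - phi)].

Definition gate1 (R : realType) (n : nat) (k : 'I_n) (G : qop1 R) : qop R n :=
  tens (fun j => if j == k then G else id1 R).

Definition cnot_map (n : nat) (k l : 'I_n) (c : bits n) : bits n :=
  [ffun j => if j == l then c l (+) c k else c j].

Definition cnot (R : realType) (n : nat) (k l : 'I_n) : qop R n :=
  fun r c => (r == cnot_map k l c)%:R.

Inductive clifford (R : realType) (n : nat) : qop R n -> Prop :=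
| clifford_id : clifford (@qid R n)
| clifford_H (k : 'I_n) U : clifford U -> clifford (qmul (gate1 k (hadamard R)) U)
| clifford_S (k : 'I_n) U : clifford U -> clifford (qmul (gate1 k (phaseS R)) U)
| clifford_CNOT (k l : 'I_n) U : k != l -> clifford U -> clifford (qmul (cnot R k l) U).

Definition ket0 (R : realType) (n : nat) : qvec R n :=
  [ffun z => (z == [ffun => false])%:R].

Definition stabilizer_state (R : realType) (n : nat) (phi : qvec R n) : Prop :=
  exists (U : qop R n) (c : R[i]),
    clifford U /\ `|c| = 1 /\ phi = c *: qapply U (@ket0 R n).

Definition fidelity (R : realType) (n : nat) (phi psi : qvec R n) : R[i] :=
  `|braket phi psi| ^+ 2.

Definition stab_fidelity_maximizer (R : realType) (n : nat) (psi phi : qvec R n) : Prop :=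
  stabilizer_state phi /\
  forall phi', stabilizer_state phi' -> fidelity phi' psi <= fidelity phi psi.

(* Main.v *)
Require Import Defs.
From HB Require Import structures.
From mathcomp Require Import all_boot all_order all_algebra.
From mathcomp Require Import reals complex ring.
From Stdlib Require Import FunctionalExtensionality.
Import Order.TTheory GRing.Theory Num.Theory.
Set Implicit Arguments.
Unset Strict Implicit.
Local Open Scope ring_scope.

Section Q.
Variable R : realType.
Variable n : nat.
Local Notation C := (R[i]).
Local Notation qop := (qop R n).
Local Notation qop1 := (qop1 R).

Definition adj (M : qop) : qop := fun r c => (M c r)^*.
Definition adj1 (A : qop1) : qop1 := fun r c => (A c r)^*.
Definition sc (a : C) (M : qop) : qop := fun r c => a * M r c.

Lemma qmulA (A B D : qop) : qmul (qmul A B) D = qmul A (qmul B D).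
Proof.
apply: functional_extensionality => r; apply: functional_extensionality => c.
rewrite /qmul.
under eq_bigr do rewrite big_distrl /=.
under [RHS]eq_bigr do rewrite big_distrr /=.
rewrite exchange_big /=; apply: eq_bigr => i _; apply: eq_bigr => j _.
by rewrite mulrA.
Qed.

Lemma sum_delta (T : finType) (a : T) (F : T -> C) :
  \sum_(m : T) (m == a)%:R * F m = F a.
Proof.
rewrite (bigD1 a) //= eqxx mul1r big1 ?addr0 // => i /negbTE ->.
by rewrite mul0r.
Qed.

Lemma sum_delta' (T : finType) (a : T) (F : T -> C) :
  \sum_(m : T) (a == m)%:R * F m = F a.
Proof. by under eq_bigr do rewrite eq_sym; apply: sum_delta. Qed.

Lemma qmul1 (A : qop) : qmul (@qid R n) A = A.
Proof.
apply: functional_extensionality => r; apply: functional_extensionality => c.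
by rewrite /qmul /qid sum_delta'.
Qed.

Lemma qmul1r (A : qop) : qmul A (@qid R n) = A.
Proof.
apply: functional_extensionality => r; apply: functional_extensionality => c.
rewrite /qmul /qid.
under eq_bigr do rewrite mulrC.
by rewrite sum_delta.
Qed.

Lemma adj_qmul (A B : qop) : adj (qmul A B) = qmul (adj B) (adj A).
Proof.
apply: functional_extensionality => r; apply: functional_extensionality => c.
rewrite /adj /qmul rmorph_sum; apply: eq_bigr => m _.
by rewrite rmorphM mulrC.
Qed.

Lemma adjK (A : qop) : adj (adj A) = A.
Proof.
apply: functional_extensionality => r; apply: functional_extensionality => c.
by rewrite /adj conjCK.
Qed.

Lemma qmul_scl a (A B : qop) : qmul (sc a A) B = sc a (qmul A B).
Proof.
apply: functional_extensionality => r; apply: functional_extensionality => c.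
rewrite /qmul /sc big_distrr; apply: eq_bigr => m _; by rewrite /= mulrA.
Qed.

Lemma qmul_scr a (A B : qop) : qmul A (sc a B) = sc a (qmul A B).
Proof.
apply: functional_extensionality => r; apply: functional_extensionality => c.
rewrite /qmul /sc big_distrr; apply: eq_bigr => m _; by rewrite mulrCA.
Qed.

Lemma sc_sc a b (A : qop) : sc a (sc b A) = sc (a * b) A.
Proof.
apply: functional_extensionality => r; apply: functional_extensionality => c.
by rewrite /sc mulrA.
Qed.

Lemma qmul_tens (A B : 'I_n -> qop1) :
  qmul (tens A) (tens B) = tens (fun j => mul1 (A j) (B j)).
Proof.
apply: functional_extensionality => r; apply: functional_extensionality => c.
rewrite /qmul /tens /mul1 bigA_distr_bigA /=; apply: eq_bigr => m _.
by rewrite big_split.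
Qed.

Lemma adj_tens (A : 'I_n -> qop1) : adj (tens A) = tens (fun j => adj1 (A j)).
Proof.
apply: functional_extensionality => r; apply: functional_extensionality => c.
by rewrite /adj /tens /adj1 rmorph_prod.
Qed.

Lemma prod_eq_nat (f g : bits n) :
  \prod_(j < n) (f j == g j)%:R = (f == g)%:R :> C.
Proof.
case: eqP => [-> | /eqP ne].
  by rewrite big1 // => j _; rewrite eqxx.
have [j hj] : exists j, f j != g j.
  apply/existsP; apply: contraR ne; rewrite negb_exists => /forallP H.
  by apply/eqP/ffunP => j; apply/eqP; have := H j; rewrite negbK.
by rewrite (bigD1 j) //= (negbTE hj) mul0r.
Qed.

Lemma qid_tens : @qid R n = tens (fun _ => id1 R).
Proof.
apply: functional_extensionality => r; apply: functional_extensionality => c.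
by rewrite /qid /tens /id1 prod_eq_nat.
Qed.


Definition P1 (a b : bool) : qop1 :=
  mul1 (if a then pauliX R else id1 R) (if b then pauliZ R else id1 R).
Definition Tq (y : bits n * bits n) : qop := tens (fun j => P1 (y.1 j) (y.2 j)).
Definition sgn (b c : bits n) : C := \prod_(j < n) (if b j && c j then -1 else 1).
Definition addf (c a : bits n) : bits n := [ffun j => c j (+) a j].

Lemma weyl_Tq y : weyl R y = sc ('i ^+ bdot y.1 y.2) (Tq y).
Proof. by []. Qed.

Lemma P1_closed a b r c : P1 a b r c = (r == c (+) a)%:R * (if b && c then -1 else 1).
Proof.
by case: a; case: b; case: r; case: c;
  rewrite /P1 /mul1 big_bool /= /pauliX /pauliZ /id1 /=;
  rewrite ?mul0r ?mulr0 ?mul1r ?mulr1 ?addr0 ?add0r.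
Qed.

Lemma Tq_closed a b r c : Tq (a, b) r c = (r == addf c a)%:R * sgn b c.
Proof.
rewrite /Tq /tens /sgn -prod_eq_nat -big_split /=; apply: eq_bigr => j _.
by rewrite P1_closed /addf ffunE.
Qed.

Lemma addf_eq r c a : (r == addf c a) = (c == addf r a).
Proof.
by apply/eqP/eqP => ->; apply/ffunP => j; rewrite !ffunE addbK.
Qed.

Lemma sgn_add b c a : sgn b (addf c a) = sgn b c * sgn b a.
Proof.
rewrite /sgn -big_split /=; apply: eq_bigr => j _; rewrite ffunE.
by case: (b j); case: (c j); case: (a j); rewrite /= ?mulr1 ?mul1r ?mulrNN ?mulr1.
Qed.

Lemma sgn_bdot a b : sgn b a = (-1) ^+ bdot a b.
Proof.
rewrite /sgn /bdot -prodr_const.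
rewrite [in RHS]big_mkcond /=; apply: eq_bigr => j _.
by rewrite inE andbC.
Qed.

Lemma cjM (x y : C) : (x * y)^* = x^* * y^*. Proof. exact: rmorphM. Qed.
Lemma cjX (x : C) k : (x ^+ k)^* = (x^*) ^+ k. Proof. exact: rmorphXn. Qed.
Lemma cjN (x : C) : (- x)^* = - x^*. Proof. exact: rmorphN. Qed.
Lemma cjD (x y : C) : (x + y)^* = x^* + y^*. Proof. exact: rmorphD. Qed.
Lemma cj1 : (1 : C)^* = 1. Proof. exact: rmorph1. Qed.
Lemma cj0 : (0 : C)^* = 0. Proof. exact: rmorph0. Qed.
Lemma cjn k : (k%:R : C)^* = k%:R. Proof. exact: rmorph_nat. Qed.
Lemma cj_sum (I : finType) (F : I -> C) : (\sum_i F i)^* = \sum_i (F i)^*.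
Proof. exact: rmorph_sum. Qed.
Lemma cj_prod (I : finType) (F : I -> C) : (\prod_i F i)^* = \prod_i (F i)^*.
Proof. exact: rmorph_prod. Qed.

Lemma conj_sgn b c : (sgn b c)^* = sgn b c.
Proof.
rewrite /sgn cj_prod; apply: eq_bigr => j _.
by case: (_ && _); rewrite ?cjN cj1.
Qed.

Lemma weyl_herm y : adj (weyl R y) = weyl R y.
Proof.
case: y => a b.
apply: functional_extensionality => r; apply: functional_extensionality => c.
rewrite /adj !weyl_Tq /sc !Tq_closed /=.
rewrite addf_eq; case: eqP => [-> | _]; last by rewrite !cjM cj0 !(mulr0, mul0r).
rewrite sgn_add !cjM cjn !conj_sgn cjX conjCi [sgn b a]sgn_bdot.
by rewrite !mul1r [sgn b c * _]mulrC mulrA -exprMn mulrN1 opprK.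
Qed.

Definition unitary (G : qop) := qmul G (adj G) = @qid R n /\ qmul (adj G) G = @qid R n.

Definition GP (G : qop) := unitary G /\
  exists g : bits n * bits n -> bits n * bits n, injective g /\
  forall y, exists gam : C, `|gam| = 1 /\
    qmul (qmul G (weyl R y)) (adj G) = sc gam (weyl R (g y)).

Lemma GP_of_Tq G (g : bits n * bits n -> bits n * bits n) :
  unitary G -> injective g ->
  (forall y, exists gam : C, `|gam| = 1 /\
    qmul (qmul G (Tq y)) (adj G) = sc gam (Tq (g y))) -> GP G.
Proof.
move=> uG ig H; split=> //; exists g; split=> // y.
have [gam [ng E]] := H y.
have nz : ('i : C) ^+ bdot (g y).1 (g y).2 != 0.
  by rewrite expf_eq0 negb_and; apply/orP; right; rewrite -normr_eq0 normCi oner_eq0.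
exists ('i ^+ bdot y.1 y.2 * gam * ('i ^+ bdot (g y).1 (g y).2)^-1); split.
  by rewrite !normrM normfV !normrX normCi ng !expr1n invr1 !mulr1.
rewrite (weyl_Tq y) (weyl_Tq (g y)) qmul_scr qmul_scl E !sc_sc -!mulrA mulVf // mulr1.
by [].
Qed.

Lemma tens_ext (A B : 'I_n -> qop1) :
  (forall j r c, A j r c = B j r c) -> tens A = tens B.
Proof.
move=> H; apply: functional_extensionality => r; apply: functional_extensionality => c.
by rewrite /tens; apply: eq_bigr => j _; rewrite H.
Qed.

Lemma mul1_id1l (A : qop1) r c : mul1 (id1 R) A r c = A r c.
Proof. by case: r; rewrite /mul1 big_bool /id1 /= ?mul1r ?mul0r ?addr0 ?add0r. Qed.

Lemma mul1_id1r (A : qop1) r c : mul1 A (id1 R) r c = A r c.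
Proof.
by case: c; rewrite /mul1 big_bool /id1 /= ?mulr1 ?mulr0 ?addr0 ?add0r.
Qed.

Lemma adj1_id1 : adj1 (id1 R) = id1 R.
Proof.
apply: functional_extensionality => r; apply: functional_extensionality => c.
by case: r; case: c; rewrite /adj1 /id1 /= ?cj1 ?cj0.
Qed.

Definition upd (f : bits n) k (v : bool) : bits n := [ffun j => if j == k then v else f j].

Lemma gate1_GP k (G1 : qop1) (g1 : bool * bool -> bool * bool) :
  (forall r c, mul1 G1 (adj1 G1) r c = id1 R r c) ->
  (forall r c, mul1 (adj1 G1) G1 r c = id1 R r c) ->
  involutive g1 ->
  (forall a b, exists gam : C, `|gam| = 1 /\ forall r c,
     mul1 (mul1 G1 (P1 a b)) (adj1 G1) r c = gam * P1 (g1 (a, b)).1 (g1 (a, b)).2 r c) ->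
  GP (gate1 k G1).
Proof.
move=> u1 u2 ig1 H.
pose gk (y : bits n * bits n) :=
  (upd y.1 k (g1 (y.1 k, y.2 k)).1, upd y.2 k (g1 (y.1 k, y.2 k)).2).
apply: (@GP_of_Tq _ gk).
- rewrite /gate1 /unitary adj_tens !qmul_tens qid_tens; split; apply: tens_ext => j r c;
  by case: (j == k); rewrite ?u1 ?u2 // adj1_id1 mul1_id1l.
- apply: (@can_inj _ _ gk gk) => -[a b].
  rewrite /gk /= /upd !ffunE eqxx /= -surjective_pairing ig1 /=.
  by congr pair; apply/ffunP => j; rewrite !ffunE; case: eqP => // ->.
- move=> [a b] /=.
  have [gam [ng E]] := H (a k) (b k).
  exists gam; split=> //.
  rewrite /gate1 /Tq adj_tens !qmul_tens.
  apply: functional_extensionality => r; apply: functional_extensionality => c.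
  rewrite /sc /tens (bigD1 k) //= [in RHS](bigD1 k) //= eqxx E mulrA.
  rewrite /gk /upd /= !ffunE eqxx; congr (_ * _).
  apply: eq_bigr => j /negbTE jk; rewrite !ffunE jk.
  by rewrite adj1_id1 mul1_id1r mul1_id1l.
Qed.

Lemma had_GP k : GP (gate1 k (hadamard R)).
Proof.
set s : C := ((Num.sqrt (2 : R))%:C%C)^-1.
have s0 : 0 <= s by rewrite invr_ge0 ler0c sqrtr_ge0.
have cs : s^* = s by apply: conj_Creal; apply: ger0_real.
have hs : s * s * 2 = 1.
  rewrite /s -invfM -rmorphM /= -expr2 sqr_sqrtr ?ler0n //.
  by rewrite rmorph_nat mulVf // pnatr_eq0.
have hH r c : hadamard R r c = (if r && c then -1 else 1) * s by [].
have cH r c : (hadamard R r c)^* = hadamard R r c.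
  by rewrite hH cjM cs; case: (_ && _); rewrite ?cjN cj1.
clearbody s.
apply: (@gate1_GP k (hadamard R) (fun p : bool * bool => (p.2, p.1))).
- move=> r c; rewrite /mul1 /adj1 big_bool /= !cH !hH /id1.
  by case: r; case: c => /=; ring: hs.
- move=> r c; rewrite /mul1 /adj1 big_bool /= !cH !hH /id1.
  by case: r; case: c => /=; ring: hs.
- by case.
move=> a b; exists (if a && b then -1 else 1); split.
  by case: (_ && _); rewrite ?normrN normr1.
move=> r c; rewrite /mul1 /adj1 !big_bool /= !cH !hH !P1_closed.
case: a; case: b; case: r; case: c => /=; first [ring: hs | by transitivity (- (s * s * 2)); [ring | rewrite hs; ring]].
Qed.

Lemma phS_GP k : GP (gate1 k (phaseS R)).
Proof.
have hi : ('i : C) * 'i = -1 by rewrite -expr2 sqrCi.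
have hS r c : phaseS R r c = (r == c)%:R * (if c then 'i else 1) by [].
have cS r c : (phaseS R r c)^* = (r == c)%:R * (if c then - 'i else 1).
  by rewrite hS cjM cjn; case: c; rewrite ?conjCi ?cj1.
apply: (@gate1_GP k (phaseS R) (fun p : bool * bool => (p.1, p.1 (+) p.2))).
- move=> r c; rewrite /mul1 /adj1 big_bool /= !cS !hS /id1.
  by case: r; case: c => /=; first [ring: hi | by transitivity (- ('i * 'i : C)); [ring | rewrite hi; ring]].
- move=> r c; rewrite /mul1 /adj1 big_bool /= !cS !hS /id1.
  by case: r; case: c => /=; first [ring: hi | by transitivity (- ('i * 'i : C)); [ring | rewrite hi; ring]].
- by case=> a b /=; rewrite addbA addbb.
move=> a b; exists (if a then 'i else 1); split.
  by case: a; rewrite ?normCi ?normr1.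
move=> r c; rewrite /mul1 /adj1 !big_bool /= !cS !hS !P1_closed.
by case: a; case: b; case: r; case: c => /=; first [ring: hi | by transitivity (- ('i * 'i : C)); [ring | rewrite hi; ring]].
Qed.

Section Cnot.
Variables (k l : 'I_n).
Hypothesis kl : k != l.
Local Notation pi := (cnot_map k l).
Definition pi' (b : bits n) : bits n := [ffun j => if j == k then b k (+) b l else b j].

Lemma lk : (l == k) = false. Proof. by apply/negbTE; rewrite eq_sym. Qed.

Lemma pi_inv c : pi (pi c) = c.
Proof.
apply/ffunP => j; rewrite /cnot_map !ffunE.
case: eqP => [-> | _] //; rewrite eqxx (negbTE kl).
by rewrite -addbA addbb addbF.
Qed.

Lemma pi'_inv b : pi' (pi' b) = b.
Proof.
apply/ffunP => j; rewrite /pi' !ffunE.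
case: eqP => [-> | _] //; rewrite eqxx lk.
by rewrite -addbA addbb addbF.
Qed.

Lemma pi_add x y : pi (addf x y) = addf (pi x) (pi y).
Proof.
apply/ffunP => j; rewrite /cnot_map /addf !ffunE.
case: eqP => _ //; by case: (x l); case: (y l); case: (x k); case: (y k).
Qed.

Lemma eq_pi x y : (x == pi y) = (pi x == y).
Proof. by rewrite -(inj_eq (can_inj pi_inv)) pi_inv. Qed.

Lemma prod2 (F : 'I_n -> C) :
  \prod_j F j = F k * F l * \prod_(j | (j != k) && (j != l)) F j.
Proof. by rewrite (bigD1 k) //= (bigD1 l) /= ?lk // mulrA. Qed.

Lemma sgn_pi b c : sgn b (pi c) = sgn (pi' b) c.
Proof.
rewrite /sgn (prod2 (fun j => if b j && pi c j then -1 else 1)).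
rewrite (prod2 (fun j => if pi' b j && c j then -1 else 1)).
rewrite /cnot_map /pi' !ffunE eqxx (negbTE kl) lk.
congr (_ * _).
  by rewrite eqxx; case: (b k); case: (b l); case: (c k); case: (c l); rewrite /= ?mulrNN ?mulr1 ?mul1r.
apply eq_bigr => j /andP [/negbTE jk /negbTE jl].
by rewrite !ffunE jk jl.
Qed.

Lemma adj_cnot : adj (cnot R k l) = cnot R k l.
Proof.
apply: functional_extensionality => r; apply: functional_extensionality => c.
by rewrite /adj /cnot cjn eq_pi eq_sym.
Qed.

Lemma cnot_conj (M : qop) : qmul (qmul (cnot R k l) M) (cnot R k l) = fun r c => M (pi r) (pi c).
Proof.
apply: functional_extensionality => r; apply: functional_extensionality => c.
rewrite /qmul /cnot.
have E m : \sum_m' (r == pi m')%:R * M m' m = M (pi r) m.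
  by under eq_bigr do rewrite eq_pi; rewrite sum_delta'.
under eq_bigr do rewrite E mulrC.
by rewrite sum_delta.
Qed.

Lemma cnot_GP : GP (cnot R k l).
Proof.
have u : unitary (cnot R k l).
  rewrite /unitary adj_cnot.
  suff -> : qmul (cnot R k l) (cnot R k l) = @qid R n by [].
  rewrite -[X in qmul X _]qmul1r cnot_conj /qid.
  apply: functional_extensionality => r; apply: functional_extensionality => c.
  by rewrite (inj_eq (can_inj pi_inv)).
apply: (@GP_of_Tq _ (fun y : bits n * bits n => (pi y.1, pi' y.2))) => //.
  apply: (@can_inj _ _ _ (fun y : bits n * bits n => (pi y.1, pi' y.2))) => -[a b] /=.
  by rewrite pi_inv pi'_inv.
move=> [a b]; exists 1; split; first by rewrite normr1.
rewrite adj_cnot cnot_conj.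
apply: functional_extensionality => r; apply: functional_extensionality => c.
rewrite /sc mul1r !Tq_closed /= sgn_pi.
congr (_ * _); congr (_%:R).
by rewrite -{1}(pi_inv a) -pi_add (inj_eq (can_inj pi_inv)).
Qed.
End Cnot.

Lemma adj_qid : adj (@qid R n) = @qid R n.
Proof.
apply: functional_extensionality => r; apply: functional_extensionality => c.
by rewrite /adj /qid cjn eq_sym.
Qed.

Lemma sc1 (M : qop) : sc 1 M = M.
Proof.
apply: functional_extensionality => r; apply: functional_extensionality => c.
by rewrite /sc mul1r.
Qed.

Lemma GP_qid : GP (@qid R n).
Proof.
split; first by rewrite /unitary adj_qid qmul1.
exists id; split=> // y; exists 1; split; first by rewrite normr1.
by rewrite adj_qid qmul1 qmul1r sc1.
Qed.

Lemma GP_mul G U : GP G -> GP U -> GP (qmul G U).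
Proof.
move=> [[uG1 uG2] [g [ig Hg]]] [[uU1 uU2] [h [ih Hh]]].
split.
  split; rewrite adj_qmul.
    by rewrite qmulA -(qmulA U) uU1 qmul1 uG1.
  by rewrite qmulA -(qmulA (adj G)) uG2 qmul1 uU2.
exists (g \o h); split; first exact: inj_comp.
move=> y; have [c [nc Ec]] := Hh y; have [c' [nc' Ec']] := Hg (h y).
exists (c * c'); split; first by rewrite normrM nc nc' mulr1.
have -> : qmul (qmul (qmul G U) (weyl R y)) (adj (qmul G U)) =
          qmul (qmul G (qmul (qmul U (weyl R y)) (adj U))) (adj G).
  by rewrite adj_qmul !qmulA.
by rewrite Ec qmul_scr qmul_scl Ec' sc_sc.
Qed.

Lemma clifford_GP U : clifford U -> GP U.
Proof.
elim=> [| k V _ IH | k V _ IH | k l V kl _ IH].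
- exact: GP_qid.
- exact: GP_mul (had_GP k) IH.
- exact: GP_mul (phS_GP k) IH.
- exact: GP_mul (@cnot_GP k l kl) IH.
Qed.

Local Notation qvec := (qvec R n).

Lemma scE (a : C) (v : qvec) z : (a *: v) z = a * v z.
Proof. by rewrite ffunE. Qed.

Lemma qapply_mul (A B : qop) (v : qvec) : qapply (qmul A B) v = qapply A (qapply B v).
Proof.
apply/ffunP => z; rewrite !ffunE /qmul.
under eq_bigr do rewrite big_distrl /=.
under [RHS]eq_bigr do rewrite ffunE big_distrr /=.
rewrite exchange_big /=; apply: eq_bigr => i _; apply: eq_bigr => j _.
by rewrite mulrA.
Qed.

Lemma qapply_sc a (M : qop) (v : qvec) : qapply (sc a M) v = a *: qapply M v.
Proof.
apply/ffunP => z; rewrite !ffunE /sc -[a *: _]/(a * _) big_distrr; apply: eq_bigr => i _.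
by rewrite -mulrA.
Qed.

Lemma qapply_scale (M : qop) a (v : qvec) : qapply M (a *: v) = a *: qapply M v.
Proof.
apply/ffunP => z; rewrite !ffunE -[a *: (\sum_c _)]/(a * _) big_distrr; apply: eq_bigr => i _ /=.
by rewrite ffunE mulrCA.
Qed.

Lemma qapply_id (v : qvec) : qapply (@qid R n) v = v.
Proof. by apply/ffunP => z; rewrite !ffunE /qid sum_delta'. Qed.

Lemma braket_adj (u : qvec) M v : braket u (qapply M v) = braket (qapply (adj M) u) v.
Proof.
rewrite /braket.
under eq_bigr do rewrite ffunE big_distrr /=.
under [RHS]eq_bigr do rewrite ffunE cj_sum big_distrl /=.
rewrite exchange_big /=; apply: eq_bigr => i _; apply: eq_bigr => j _.
by rewrite /adj cjM conjCK mulrCA mulrA.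
Qed.

Lemma braket_scl a (u v : qvec) : braket (a *: u) v = a^* * braket u v.
Proof.
rewrite /braket big_distrr; apply: eq_bigr => i _.
by rewrite scE cjM -mulrA.
Qed.

Lemma braket_sym (u v : qvec) : braket v u = (braket u v)^*.
Proof.
rewrite /braket cj_sum; apply: eq_bigr => i _.
by rewrite cjM conjCK mulrC.
Qed.

Lemma braket_ket0 (w : qvec) : braket (@ket0 R n) w = w [ffun => false].
Proof.
rewrite /braket; under eq_bigr do rewrite ffunE cjn.
exact: sum_delta.
Qed.

Lemma weyl_real (psi : qvec) x :
  (braket psi (qapply (weyl R x) psi))^* = braket psi (qapply (weyl R x) psi).
Proof.
by rewrite -braket_sym braket_adj weyl_herm.
Qed.

Lemma p_norm (psi : qvec) x :
  p_psi psi x = (2%:R ^+ n)^-1 * `|braket psi (qapply (weyl R x) psi)| ^+ 2.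
Proof. by rewrite /p_psi normCK weyl_real expr2. Qed.

Lemma p_ge0 (psi : qvec) x : 0 <= p_psi psi x.
Proof.
by rewrite p_norm mulr_ge0 ?exprn_ge0 // invr_ge0 exprn_ge0 // ler0n.
Qed.

Lemma eig_pm x (v : qvec) e : braket v v != 0 -> `|e| = 1 ->
  qapply (weyl R x) v = e *: v -> e = 1 \/ e = -1.
Proof.
move=> nv ne E.
have ee : e^* = e.
  have h1 : braket v (qapply (weyl R x) v) = e * braket v v.
    by rewrite E /braket big_distrr; apply: eq_bigr => i _; rewrite scE mulrCA.
  have h2 : braket v (qapply (weyl R x) v) = e^* * braket v v.
    by rewrite braket_adj weyl_herm E braket_scl.
  by apply: (mulIf nv); rewrite -h2 -h1.
have : e ^+ 2 == 1.
  by rewrite expr2 -{2}ee -normCK ne expr1n.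
by rewrite sqrf_eq1 => /orP [/eqP -> | /eqP ->]; [left | right].
Qed.

Lemma char_orth (z z' : bits n) :
  \sum_(b : bits n) sgn b z * sgn b z' = (z == z')%:R * 2%:R ^+ n.
Proof.
rewrite /sgn; under eq_bigr do rewrite -big_split /=.
rewrite -(bigA_distr_bigA (fun (j : 'I_n) (be : bool) =>
  (if be && z j then -1 else 1) * (if be && z' j then -1 else 1))) /=.
have -> : (2%:R : C) ^+ n = \prod_(j < n) 2%:R by rewrite prodr_const card_ord.
rewrite -prod_eq_nat -big_split /=.
apply: eq_bigr => j _; rewrite big_bool /=.
by case: (z j); case: (z' j); rewrite /= ?mulrNN ?mulr1 ?mulN1r ?mul1r ?addNr ?mulr2n ?mul0r.
Qed.

Lemma parseval (u : bits n -> C) : (forall z, (u z)^* = u z) ->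
  \sum_(b : bits n) `|\sum_(z : bits n) u z * sgn b z| ^+ 2 =
  2%:R ^+ n * \sum_(z : bits n) u z ^+ 2.
Proof.
move=> hu.
have E b : `|\sum_(z : bits n) u z * sgn b z| ^+ 2 =
    \sum_(z : bits n) \sum_(z' : bits n) u z * u z' * (sgn b z * sgn b z').
  rewrite normCK cj_sum big_distrl /=; apply: eq_bigr => z _.
  rewrite big_distrr /=; apply: eq_bigr => z' _.
  rewrite cjM hu conj_sgn; ring.
under eq_bigr do rewrite E.
rewrite exchange_big /=.
under eq_bigr do rewrite exchange_big /=.
under eq_bigr do under eq_bigr do rewrite -big_distrr /= char_orth.
rewrite big_distrr /=; apply: eq_bigr => z _.
rewrite (bigD1 z) //= eqxx big1 => [| z' /negbTE]; last by rewrite eq_sym => ->; rewrite !mul0r mulr0.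
by rewrite addr0 mul1r expr2; ring.
Qed.

Lemma braket_scr a (u v : qvec) : braket u (a *: v) = a * braket u v.
Proof.
rewrite /braket big_distrr; apply: eq_bigr => i _.
by rewrite scE mulrCA.
Qed.

Definition Z0 (b : bits n) : bits n * bits n := ([ffun => false], b).

Lemma weyl0_apply b (w : qvec) z : qapply (weyl R (Z0 b)) w z = sgn b z * w z.
Proof.
rewrite ffunE.
have bd : bdot (Z0 b).1 (Z0 b).2 = 0%N.
  rewrite /bdot; apply/eqP; rewrite cards_eq0; apply/eqP/setP => j.
  by rewrite !inE ffunE.
under eq_bigr => c _ do rewrite weyl_Tq /sc bd expr0 mul1r [Z0 b]surjective_pairing Tq_closed.
have ad c : addf c [ffun => false] = c by apply/ffunP => j; rewrite !ffunE addbF.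
under eq_bigr => c _ do rewrite /= ad -mulrA.
by rewrite sum_delta'.
Qed.

Lemma weyl0_ket0 b : qapply (weyl R (Z0 b)) (@ket0 R n) = @ket0 R n.
Proof.
apply/ffunP => z; rewrite weyl0_apply ffunE.
case: eqP => [-> | _]; last by rewrite !mulr0.
rewrite mulr1 /sgn big1 // => j _; by rewrite ffunE andbF.
Qed.

End Q.

Unset Implicit Arguments.
Set Strict Implicit.

Theorem lemma5p2 (R : realType) (n : nat) (psi phi : qvec R n) :
  is_state psi ->
  stab_fidelity_maximizer psi phi ->
  fidelity phi psi ^+ 2 <= \sum_(x in weyl_set phi) p_psi psi x.
Proof.
move=> _ [[U [a [cU [na ephi]]]] _].
have [[uU1 uU2] [kf [ikf Hk]]] := clifford_GP cU.
have bv0 : braket (qapply U (@ket0 R n)) (qapply U (@ket0 R n)) = 1.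
  by rewrite braket_adj -qapply_mul uU2 qapply_id braket_ket0 ffunE eqxx.
have incl b : kf (Z0 b) \in weyl_set phi.
  have [c [nc Ec]] := Hk (Z0 b).
  have c0 : c != 0 by rewrite -normr_eq0 nc oner_eq0.
  have E1 : c *: qapply (weyl R (kf (Z0 b))) (qapply U (@ket0 R n)) = qapply U (@ket0 R n).
    rewrite -qapply_sc -Ec !qapply_mul -(qapply_mul (adj U) U) uU2 qapply_id.
    by rewrite weyl0_ket0.
  have E2 : qapply (weyl R (kf (Z0 b))) (qapply U (@ket0 R n)) = c^-1 *: qapply U (@ket0 R n).
    by rewrite -{2}E1 scalerA mulVf // scale1r.
  have nz : braket (qapply U (@ket0 R n)) (qapply U (@ket0 R n)) != 0 by rewrite bv0 oner_eq0.
  have ne : `|c^-1| = 1 by rewrite normfV nc invr1.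
  have [e1|e1] := eig_pm nz ne E2.
    by rewrite inE ephi qapply_scale E2 e1 scale1r eqxx.
  by rewrite inE ephi qapply_scale E2 e1 scaleN1r scalerN eqxx orbT.
set T := [set kf (Z0 b) | b : bits n].
have sub : T \subset weyl_set phi by apply/subsetP => x /imsetP [b _ ->]; exact: incl.
rewrite (big_setID T) /= (setIidPr sub) big_imset /=; last first.
  by move=> b b' _ _ /ikf [].
set chi := qapply (adj U) psi.
have pk b : p_psi psi (kf (Z0 b)) =
    (2%:R ^+ n)^-1 * `|\sum_(z : bits n) `|chi z| ^+ 2 * @sgn R n b z| ^+ 2.
  rewrite p_norm; congr (_ * _ ^+ 2).
  have [c [nc Ec]] := Hk (Z0 b).
  have := congr1 (fun M => braket psi (qapply M psi)) Ec => /=.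
  rewrite qapply_sc braket_scr !qapply_mul braket_adj => E.
  rewrite -[LHS]mul1r -nc -normrM -E /braket; congr `|_|; apply: eq_bigr => z _.
  by rewrite weyl0_apply normCKC /chi; ring.
under eq_bigr do rewrite pk.
rewrite -big_distrr /= parseval; last first.
  by move=> z; apply: conj_Creal; apply: ger0_real; rewrite exprn_ge0.
rewrite mulrA mulVf ?mul1r; last by rewrite expf_eq0 pnatr_eq0 andbF.
rewrite -[fidelity _ _ ^+ 2]addr0; apply: lerD; last first.
  by apply: sumr_ge0 => x _; exact: p_ge0.
have -> : fidelity phi psi = `|chi [ffun => false]| ^+ 2.
  rewrite /fidelity ephi braket_scl normrM norm_conjC na mul1r.
  by rewrite braket_sym braket_adj -/chi -braket_sym braket_ket0.
rewrite (bigD1 [ffun => false]) //= lerDl sumr_ge0 // => z _.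
by rewrite !exprn_ge0.
Qed.
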